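(* Let $A$ be a system of $n_A$ qubits and $B$ a system of $n_B$ qubits, and let $\mathcal{P}$ be a CPTP map from operators on $H_{A_1}\otimes H_{B_1}$ (time $t_1$) to operators on $H_{A_2}\otimes H_{B_2}$ (time $t_2$) that allows signalling in neither direction, i.e. there exist completely positive maps $\mathcal{T}$ (from $A_1$ to $A_2$) and $\mathcal{S}$ (from $B_1$ to $B_2$) with $\mathrm{Tr}_{B_2}\mathcal{P}(\rho)=\mathcal{T}(\mathrm{Tr}_{B_1}\rho)$ and $\mathrm{Tr}_{A_2}\mathcal{P}(\rho)=\mathcal{S}(\mathrm{Tr}_{A_1}\rho)$ for all states $\rho$ on $H_{A_1}\otimes H_{B_1}$. Then for every state $\rho_{A_1B_1}$ at time $t_1$, the pseudo-density matrices $R_{B_1A_2}$ and $R_{A_1B_2}$ are positive semidefinite and $f(R_{B_1A_2})=f(R_{A_1B_2})=0$.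
   Context: Pauli matrices $\sigma_0=\mathbb{1},\sigma_1,\sigma_2,\sigma_3$; multi-qubit Pauli matrices are tensor products of these. The coarse-grained measurement of a Pauli matrix $\Sigma$ on the full system $AB$ is the projective measurement $\{(\mathbb{1}\pm\Sigma)/2\}$ with outcomes $\pm1$ and Lüders update $\rho\mapsto P_\pm\rho P_\pm$. For an $n_B$-qubit Pauli $\tilde\sigma_j$ and an $n_A$-qubit Pauli $\tilde\sigma_k$: $\langle\tilde\sigma_j^{B_1},\tilde\sigma_k^{A_2}\rangle$ is the expected product of outcomes in the experiment: prepare $\rho_{A_1B_1}$, coarse-grained measurement of $\mathbb{1}_A\otimes\tilde\sigma_j$ at $t_1$, apply $\mathcal{P}$, coarse-grained measurement of $\tilde\sigma_k\otimes\mathbb{1}_B$ at $t_2$; and $R_{B_1A_2}=2^{-(n_A+n_B)}\sum_{j,k}\langle\tilde\sigma_j^{B_1},\tilde\sigma_k^{A_2}\rangle\,\tilde\sigma_j\otimes\tilde\sigma_k$. Analogously, $R_{A_1B_2}=2^{-(n_A+n_B)}\sum_{i,l}\langle\tilde\sigma_i^{A_1},\tilde\sigma_l^{B_2}\rangle\,\tilde\sigma_i\otimes\tilde\sigma_l$ with measurement of $\tilde\sigma_i\otimes\mathbb{1}_B$ at $t_1$ and $\mathbb{1}_A\otimes\tilde\sigma_l$ at $t_2$. The PDM negativity is $f(R)=\mathrm{Tr}\sqrt{RR^\dagger}-1$. *)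

(* Defs.v *)
From HB Require Import structures.
From mathcomp Require Import all_boot all_order all_algebra.
From mathcomp Require Import mxtens.
From Stdlib Require Import ClassicalEpsilon.
Set Implicit Arguments. Unset Strict Implicit. Unset Printing Implicit Defensive.
Import Order.TTheory GRing.Theory Num.Theory Num.Def.
Local Open Scope ring_scope.

(* pow2 n = 2^n : dimension of the Hilbert space of n qubits *)
Fixpoint pow2 (n : nat) : nat := match n with 0 => 1 | S n' => 2 * pow2 n' end.

Section QDefs.
Variable C : numClosedFieldType.

Definition adjmx m n (M : 'M[C]_(m, n)) : 'M[C]_(n, m) := (map_mx conjC M)^T.

Definition psd n (M : 'M[C]_n) : Prop :=
  M = adjmx M /\ forall v : 'cV[C]_n, 0 <= (adjmx v *m M *m v) ord0 ord0.

Definition state n (M : 'M[C]_n) : Prop := psd M /\ \tr M = 1.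

(* Tensor ordering: H_X (x) H_Y is indexed by mxtens_index (x, y). *)
Definition ptr2 m n (M : 'M[C]_(m * n)) : 'M[C]_m :=
  \matrix_(i, j) \sum_(k < n) M (mxtens_index (i, k)) (mxtens_index (j, k)).
Definition ptr1 m n (M : 'M[C]_(m * n)) : 'M[C]_n :=
  \matrix_(i, j) \sum_(k < m) M (mxtens_index (k, i)) (mxtens_index (k, j)).

(* (id_k (x) Phi) applied to an operator on C^k (x) C^m *)
Definition ampl k m n (Phi : 'M[C]_m -> 'M[C]_n) (X : 'M[C]_(k * m)) : 'M[C]_(k * n) :=
  \matrix_(p, q)
    Phi (\matrix_(i, j) X (mxtens_index ((mxtens_unindex p).1, i))
                          (mxtens_index ((mxtens_unindex q).1, j)))
        (mxtens_unindex p).2 (mxtens_unindex q).2.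

Definition cp m n (Phi : 'M[C]_m -> 'M[C]_n) : Prop :=
  forall (k : nat) (X : 'M[C]_(k * m)), psd X -> psd (ampl Phi X).

Definition tp m n (Phi : 'M[C]_m -> 'M[C]_n) : Prop :=
  forall X, \tr (Phi X) = \tr X.

Definition pauli1 (i : 'I_4) : 'M[C]_2 :=
  match val i with
  | 0 => 1%:M
  | 1 => \matrix_(r, c) (if r == c then 0 else 1)
  | 2 => \matrix_(r, c) (if r == c then 0 else if r == ord0 then - 'i else 'i)
  | _ => \matrix_(r, c) (if r == c then (if r == ord0 then 1 else -1) else 0)
  end.

Fixpoint pauliN (n : nat) (f : nat -> 'I_4) : 'M[C]_(pow2 n) :=
  match n with
  | 0 => 1%:M
  | S n' => pauli1 (f 0%N) *t pauliN n' (fun i => f i.+1)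
  end.

Definition pauli n (j : n.-tuple 'I_4) : 'M[C]_(pow2 n) :=
  pauliN n (fun i => nth ord0 j i).

(* projector of the coarse-grained measurement of Sigma with outcome s = +-1 *)
Definition proj n (s : C) (Sig : 'M[C]_n) : 'M[C]_n := 2^-1 *: (1%:M + s *: Sig).

(* expected product of outcomes: prepare rho, measure Sig1 (Lueders update),
   apply P, measure Sig2 *)
Definition corr n (P : 'M[C]_n -> 'M[C]_n) (rho Sig1 Sig2 : 'M[C]_n) : C :=
  \sum_(a <- [:: 1; -1]) \sum_(b <- [:: 1; -1])
    a * b * \tr (proj b Sig2 *m P (proj a Sig1 *m rho *m proj a Sig1) *m proj b Sig2).

Definition R_B1A2 nA nB (P : 'M[C]_(pow2 nA * pow2 nB) -> 'M[C]_(pow2 nA * pow2 nB))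
  (rho : 'M[C]_(pow2 nA * pow2 nB)) : 'M[C]_(pow2 nB * pow2 nA) :=
  ((2 : C) ^+ (nA + nB))^-1 *:
    \sum_(j : nB.-tuple 'I_4) \sum_(k : nA.-tuple 'I_4)
      corr P rho ((1%:M : 'M[C]_(pow2 nA)) *t pauli j)
                 (pauli k *t (1%:M : 'M[C]_(pow2 nB)))
      *: (pauli j *t pauli k).

Definition R_A1B2 nA nB (P : 'M[C]_(pow2 nA * pow2 nB) -> 'M[C]_(pow2 nA * pow2 nB))
  (rho : 'M[C]_(pow2 nA * pow2 nB)) : 'M[C]_(pow2 nA * pow2 nB) :=
  ((2 : C) ^+ (nA + nB))^-1 *:
    \sum_(i : nA.-tuple 'I_4) \sum_(l : nB.-tuple 'I_4)
      corr P rho (pauli i *t (1%:M : 'M[C]_(pow2 nB)))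
                 ((1%:M : 'M[C]_(pow2 nA)) *t pauli l)
      *: (pauli i *t pauli l).

Definition sqrtm n (M : 'M[C]_n) : 'M[C]_n :=
  epsilon (inhabits 0) (fun S => psd S /\ S *m S = M).

Definition pdm_neg n (R : 'M[C]_n) : C := \tr (sqrtm (R *m adjmx R)) - 1.

Definition no_signalling nA nB
  (P : 'M[C]_(pow2 nA * pow2 nB) -> 'M[C]_(pow2 nA * pow2 nB)) : Prop :=
  exists (T : {linear 'M[C]_(pow2 nA) -> 'M[C]_(pow2 nA)})
         (S : {linear 'M[C]_(pow2 nB) -> 'M[C]_(pow2 nB)}),
    cp T /\ cp S /\
    forall rho : 'M[C]_(pow2 nA * pow2 nB), state rho ->
      ptr2 (P rho) = T (ptr2 rho) /\ ptr1 (P rho) = S (ptr1 rho).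

End QDefs.

(* Main.v *)
Require Import Defs.
From HB Require Import structures.
From mathcomp Require Import all_boot all_order all_algebra.
From mathcomp Require Import mxtens.
From Stdlib Require Import ClassicalEpsilon.
From mathcomp Require Import ring lra.
Set Implicit Arguments. Unset Strict Implicit. Unset Printing Implicit Defensive.
Import Order.TTheory GRing.Theory Num.Theory Num.Def.
Local Open Scope ring_scope.

Section L.
Variable C : numClosedFieldType.

Lemma adjmxE m n (M : 'M[C]_(m,n)) i j : adjmx M i j = (M j i)^*.
Proof. by rewrite /adjmx !mxE. Qed.

Lemma adjmxK m n (M : 'M[C]_(m,n)) : adjmx (adjmx M) = M.
Proof. by apply/matrixP=> i j; rewrite !adjmxE conjCK. Qed.

Lemma adjmxM m n p (A : 'M[C]_(m,n)) (B : 'M[C]_(n,p)) :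
  adjmx (A *m B) = adjmx B *m adjmx A.
Proof. by rewrite /adjmx map_mxM trmx_mul. Qed.

Lemma adjmxD m n (A B : 'M[C]_(m,n)) : adjmx (A + B) = adjmx A + adjmx B.
Proof. by apply/matrixP=> i j; rewrite !(adjmxE, mxE) rmorphD. Qed.

Lemma adjmxB m n (A B : 'M[C]_(m,n)) : adjmx (A - B) = adjmx A - adjmx B.
Proof. by apply/matrixP=> i j; rewrite !(adjmxE, mxE) rmorphB. Qed.

Lemma adjmxZ m n a (A : 'M[C]_(m,n)) : adjmx (a *: A) = a^* *: adjmx A.
Proof. by apply/matrixP=> i j; rewrite !(adjmxE, mxE) rmorphM. Qed.

Lemma adjmx1 n : adjmx (1%:M : 'M[C]_n) = 1%:M.
Proof. by apply/matrixP=> i j; rewrite !(adjmxE, mxE) eq_sym rmorph_nat. Qed.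

Lemma adjmxT m n p q (A : 'M[C]_(m,n)) (B : 'M[C]_(p,q)) :
  adjmx (A *t B) = adjmx A *t adjmx B.
Proof. by apply/matrixP=> i j; rewrite !(adjmxE, mxE) rmorphM. Qed.

Definition qf n (S : 'M[C]_n) (x y : 'cV[C]_n) := (adjmx x *m S *m y) ord0 ord0.

Lemma qf_conj n (S : 'M[C]_n) x y : S = adjmx S -> (qf S x y)^* = qf S y x.
Proof.
move=> HS; rewrite /qf -adjmxE !adjmxM adjmxK -HS mulmxA.
by congr (_ _ _); rewrite !ord1.
Qed.


Lemma qfDl n (S : 'M[C]_n) x1 x2 y : qf S (x1 + x2) y = qf S x1 y + qf S x2 y.
Proof. by rewrite /qf adjmxD !mulmxDl mxE. Qed.
Lemma qfDr n (S : 'M[C]_n) x y1 y2 : qf S x (y1 + y2) = qf S x y1 + qf S x y2.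
Proof. by rewrite /qf !mulmxDr mxE. Qed.
Lemma qfZl n (S : 'M[C]_n) a x y : qf S (a *: x) y = a^* * qf S x y.
Proof. by rewrite /qf adjmxZ -!scalemxAl mxE. Qed.
Lemma qfZr n (S : 'M[C]_n) a x y : qf S x (a *: y) = a * qf S x y.
Proof. by rewrite /qf -!scalemxAr mxE. Qed.

Lemma adjmx_delta m n (i : 'I_m) (j : 'I_n) :
  adjmx (delta_mx i j : 'M[C]_(m,n)) = delta_mx j i.
Proof.
apply/matrixP=> a b; rewrite !(adjmxE, mxE) rmorph_nat.
by rewrite andbC.
Qed.

Lemma qf_deltal n (S : 'M[C]_n) i y : qf S (delta_mx i 0) y = (S *m y) i 0.
Proof. by rewrite /qf adjmx_delta -rowE -row_mul mxE. Qed.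

Lemma qf_delta n (S : 'M[C]_n) i : qf S (delta_mx i 0) (delta_mx i 0) = S i i.
Proof. by rewrite qf_deltal -colE mxE. Qed.

Lemma psd_diag n (S : 'M[C]_n) i : psd S -> 0 <= S i i.
Proof. by case=> _ /(_ (delta_mx i 0)); rewrite -/(qf _ _ _) qf_delta. Qed.

Lemma psd_zero n (S : 'M[C]_n) v : psd S -> qf S v v = 0 -> S *m v = 0.
Proof.
move=> HS Hv; have [Hh Hq] := HS.
apply/matrixP=> i j; rewrite ord1 [RHS]mxE.
set c := (S *m v) i 0; set a := S i i.
have a0 : 0 <= a by apply: psd_diag.
have ar : a^* = a by apply/conj_Creal/ger0_real.
have H := Hq ((a + 1) *: v + (- c) *: delta_mx i 0).
rewrite -/(qf _ _ _) !(qfDl, qfDr, qfZl, qfZr) Hv qf_delta qf_deltal -/c in H.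
have E : qf S v (delta_mx i 0) = c^* by rewrite -qf_conj // qf_deltal.
have E1 : (a + 1)^* = a + 1 by rewrite rmorphD /= ar rmorph1.
have E2 : (- c)^* = - c^* by rewrite rmorphN.
have : 0 <= - ((c * c^*) * (a + 2)).
  move: H; rewrite E E1 E2 -/a; congr (_ <= _); ring.
rewrite oppr_ge0 -normCK pmulr_lle0; last by rewrite ltr_wpDl.
move=> H1; apply/eqP; rewrite -normr_eq0 -sqrf_eq0 eq_le H1 /=.
by rewrite exprn_ge0.
Qed.


Lemma psd_conjW N K (W : 'M[C]_(N,K)) rho : psd rho -> psd (adjmx W *m rho *m W).
Proof.
case=> Hh Hq; split.
  by rewrite !adjmxM adjmxK -Hh mulmxA.
move=> v; have := Hq (W *m v).
by rewrite adjmxM !mulmxA.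
Qed.

Lemma psd_ge0 n (S : 'M[C]_n) v : psd S -> 0 <= qf S v v.
Proof. by case=> _; apply. Qed.

Lemma psd1 n : psd (1%:M : 'M[C]_n).
Proof.
split; first by rewrite adjmx1.
move=> v; rewrite mulmx1 mxE; apply: sumr_ge0 => k _.
by rewrite adjmxE mulrC -normCK exprn_ge0.
Qed.

Lemma mul_col m n p (A : 'M[C]_(m,n)) (B : 'M[C]_(n,p)) j :
  A *m col j B = col j (A *m B).
Proof. by rewrite !colE mulmxA. Qed.

Lemma adjmx_col m n (D : 'M[C]_(m,n)) i : adjmx (col i D) = row i (adjmx D).
Proof. by apply/matrixP=> a b; rewrite !(adjmxE, mxE). Qed.

Lemma trace_qf n (D S : 'M[C]_n) : adjmx D = D ->
  \tr (D *m S *m D) = \sum_i qf S (col i D) (col i D).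
Proof.
move=> HD; rewrite /mxtrace; apply: eq_bigr => i _.
rewrite /qf adjmx_col HD (mul_col (row i D *m S)) -row_mul -row_mul.
by rewrite !mxE.
Qed.

Lemma col_zero m n (D : 'M[C]_(m,n)) : (forall i, col i D = 0) -> D = 0.
Proof.
move=> H; apply/matrixP=> a b.
by have /matrixP/(_ a 0) := H b; rewrite !mxE.
Qed.

Lemma psd_sqrt_uniq n (S R : 'M[C]_n) : psd S -> psd R -> S *m S = R *m R -> S = R.
Proof.
move=> HS HR HSR.
set D := S - R.
have HD : adjmx D = D by rewrite /D adjmxB -HS.1 -HR.1.
have E1 : S *m D = - (D *m R).
  apply/eqP; rewrite -addr_eq0 /D mulmxBr mulmxBl HSR.
  by rewrite addrA subrK subrr.
have E2 : \tr (D *m S *m D) + \tr (D *m R *m D) = 0.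
  rewrite -mulmxA E1 mulmxN raddfN /= mulmxA.
  have -> : \tr (D *m D *m R) = \tr (D *m R *m D) by rewrite -mulmxA mxtrace_mulC.
  by rewrite addNr.
rewrite !trace_qf // -big_split /= in E2.
have Z i : qf S (col i D) (col i D) = 0 /\ qf R (col i D) (col i D) = 0.
  have h1 := psd_ge0 (col i D) HS; have h2 := psd_ge0 (col i D) HR.
  have H0 : qf S (col i D) (col i D) + qf R (col i D) (col i D) = 0.
    by apply: (psumr_eq0P _ E2) => // j _; rewrite addr_ge0 // psd_ge0.
  by move/eqP: H0; rewrite paddr_eq0 // => /andP[/eqP -> /eqP ->].
have SD : S *m D = 0.
  by apply: col_zero => i; rewrite -mul_col (psd_zero HS (Z i).1).
have RD : R *m D = 0.
  by apply: col_zero => i; rewrite -mul_col (psd_zero HR (Z i).2).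
have DD : D *m 1%:M *m D = 0 by rewrite mulmx1 {1}/D mulmxBl SD RD subrr.
have := trace_qf (1%:M) HD; rewrite DD linear0 => /esym E3.
have D0 : D = 0.
  apply: col_zero => i.
  rewrite -[col i D]mul1mx; apply: (psd_zero (psd1 n)).
  by apply: (psumr_eq0P _ E3) => // j _; apply/psd_ge0/psd1.
by apply/eqP; rewrite -subr_eq0 -/D D0.
Qed.


Lemma pdm_neg0 n (R : 'M[C]_n) : psd R -> \tr R = 1 -> pdm_neg R = 0.
Proof.
move=> HR Htr; rewrite /pdm_neg -HR.1 /sqrtm.
have := epsilon_spec (inhabits (0:'M[C]_n)) (fun S => psd S /\ S *m S = R *m R)
   (ex_intro _ R (conj HR erefl)).
case=> HS E.
by rewrite (psd_sqrt_uniq HS HR E) Htr subrr.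
Qed.


Lemma sum_tens m n (F : 'I_(m * n) -> C) :
  \sum_p F p = \sum_i \sum_j F (mxtens_index (i, j)).
Proof.
rewrite pair_big /=; apply: reindex => /=.
exists (@mxtens_unindex m n) => p _; first by case: p => a b; rewrite mxtens_indexK.
by case: (mxtens_unindex p) (mxtens_unindexK p) => a b.
Qed.

Lemma sum_delta (I : finType) (i : I) (F : I -> C) :
  \sum_j (i == j)%:R * F j = F i.
Proof.
rewrite (bigD1 i) //= eqxx mul1r big1 ?addr0 // => j /negbTE.
by rewrite eq_sym => ->; rewrite mul0r.
Qed.

Lemma sum_delta' (I : finType) (i : I) (F : I -> C) :
  \sum_j (j == i)%:R * F j = F i.
Proof. by rewrite -(sum_delta i); apply: eq_bigr => j _; rewrite eq_sym. Qed.

Lemma tens_mxP m n p q (A B : 'M[C]_(m * n, p * q)) :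
  (forall i j k l, A (mxtens_index (i, j)) (mxtens_index (k, l))
                 = B (mxtens_index (i, j)) (mxtens_index (k, l))) -> A = B.
Proof.
move=> H; apply/matrixP=> x y.
by case: (mxtens_indexP x) => i j; case: (mxtens_indexP y) => k l.
Qed.

Lemma ptr2E m n (M : 'M[C]_(m * n)) i j :
  ptr2 M i j = \sum_k M (mxtens_index (i, k)) (mxtens_index (j, k)).
Proof. by rewrite mxE. Qed.
Lemma ptr1E m n (M : 'M[C]_(m * n)) i j :
  ptr1 M i j = \sum_k M (mxtens_index (k, i)) (mxtens_index (k, j)).
Proof. by rewrite mxE. Qed.

Lemma ptr2_lin m n a (M N : 'M[C]_(m * n)) :
  ptr2 (a *: M + N) = a *: ptr2 M + ptr2 N.
Proof.
apply/matrixP=> i j; rewrite !mxE mulr_sumr -big_split /=.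
by apply: eq_bigr => k _; rewrite !mxE.
Qed.
Lemma ptr1_lin m n a (M N : 'M[C]_(m * n)) :
  ptr1 (a *: M + N) = a *: ptr1 M + ptr1 N.
Proof.
apply/matrixP=> i j; rewrite !mxE mulr_sumr -big_split /=.
by apply: eq_bigr => k _; rewrite !mxE.
Qed.

Lemma tr_ptr2 m n (M : 'M[C]_(m * n)) : \tr (ptr2 M) = \tr M.
Proof. by rewrite /mxtrace sum_tens; apply: eq_bigr => i _; rewrite mxE. Qed.
Lemma tr_ptr1 m n (M : 'M[C]_(m * n)) : \tr (ptr1 M) = \tr M.
Proof.
rewrite /mxtrace sum_tens exchange_big; apply: eq_bigr => i _; rewrite mxE.
by [].
Qed.

Lemma trace_tens2 m n (A : 'M[C]_m) (Y : 'M[C]_(m * n)) :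
  \tr ((A *t (1%:M : 'M_n)) *m Y) = \tr (A *m ptr2 Y).
Proof.
rewrite /mxtrace sum_tens; apply: eq_bigr => i _.
rewrite mxE; under eq_bigr do rewrite mxE sum_tens.
rewrite exchange_big; apply: eq_bigr => i' _; rewrite ptr2E mulr_sumr.
apply: eq_bigr => a _.
under eq_bigr do rewrite tensmxE mxE -mulrA mulrCA.
by rewrite sum_delta.
Qed.

Lemma trace_tens1 m n (B : 'M[C]_n) (Y : 'M[C]_(m * n)) :
  \tr (((1%:M : 'M_m) *t B) *m Y) = \tr (B *m ptr1 Y).
Proof.
rewrite /mxtrace sum_tens exchange_big; apply: eq_bigr => a _.
rewrite mxE; under [RHS]eq_bigr do rewrite ptr1E mulr_sumr.
rewrite [RHS]exchange_big; apply: eq_bigr => i _.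
rewrite mxE sum_tens exchange_big; apply: eq_bigr => a' _.
under eq_bigr do rewrite tensmxE mxE -mulrA.
by rewrite sum_delta.
Qed.


Lemma ptr2D m n (M N : 'M[C]_(m * n)) : ptr2 (M + N) = ptr2 M + ptr2 N.
Proof. by apply/matrixP=> i j; rewrite !mxE -big_split; apply: eq_bigr => k _; rewrite mxE. Qed.
Lemma ptr2Z m n a (M : 'M[C]_(m * n)) : ptr2 (a *: M) = a *: ptr2 M.
Proof. by apply/matrixP=> i j; rewrite !mxE mulr_sumr; apply: eq_bigr => k _; rewrite mxE. Qed.
Lemma ptr2B m n (M N : 'M[C]_(m * n)) : ptr2 (M - N) = ptr2 M - ptr2 N.
Proof. by rewrite -scaleN1r ptr2D ptr2Z scaleN1r. Qed.
Lemma ptr1D m n (M N : 'M[C]_(m * n)) : ptr1 (M + N) = ptr1 M + ptr1 N.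
Proof. by apply/matrixP=> i j; rewrite !mxE -big_split; apply: eq_bigr => k _; rewrite mxE. Qed.
Lemma ptr1Z m n a (M : 'M[C]_(m * n)) : ptr1 (a *: M) = a *: ptr1 M.
Proof. by apply/matrixP=> i j; rewrite !mxE mulr_sumr; apply: eq_bigr => k _; rewrite mxE. Qed.
Lemma ptr1B m n (M N : 'M[C]_(m * n)) : ptr1 (M - N) = ptr1 M - ptr1 N.
Proof. by rewrite -scaleN1r ptr1D ptr1Z scaleN1r. Qed.

Lemma psd_add n (A B : 'M[C]_n) : psd A -> psd B -> psd (A + B).
Proof.
move=> [HA QA] [HB QB]; split; first by rewrite adjmxD -HA -HB.
by move=> v; rewrite mulmxDr mulmxDl mxE addr_ge0.
Qed.

Lemma psd_scale n c (A : 'M[C]_n) : 0 <= c -> psd A -> psd (c *: A).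
Proof.
move=> c0 [HA QA]; have cr : c^* = c by apply/conj_Creal/ger0_real.
split; first by rewrite adjmxZ cr -HA.
by move=> v; rewrite -scalemxAr -scalemxAl mxE mulr_ge0.
Qed.

Lemma psd_tr n (A : 'M[C]_n) : psd A -> 0 <= \tr A.
Proof. by move=> HA; apply: sumr_ge0 => i _; apply: psd_diag. Qed.

Lemma mul1S n b (S W : 'M[C]_n) : (1%:M + b *: S) *m W = W + b *: (S *m W).
Proof. by rewrite mulmxDl mul1mx -scalemxAl. Qed.

Lemma trQ n b (S Z : 'M[C]_n) :
  \tr (proj b S *m Z *m proj b S) =
  4^-1 * (\tr Z + b * \tr (S *m Z) + b * (\tr (S *m Z) + b * \tr (S *m (S *m Z)))).
Proof.
rewrite mxtrace_mulC /proj -!scalemxAl -scalemxAr scalerA !mul1S.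
rewrite mulmxDr -scalemxAr !(mxtraceD, mxtraceZ); congr (_ * _).
by rewrite -invfM; congr (_^-1); rewrite -natrM.
Qed.

Lemma corr_eq n (P : {linear 'M[C]_n -> 'M[C]_n}) rho S1 S2 :
  corr P rho S1 S2 = \tr (S2 *m P (proj 1 S1 *m rho *m proj 1 S1))
                   - \tr (S2 *m P (proj (-1) S1 *m rho *m proj (-1) S1)).
Proof.
rewrite /corr !big_cons !big_nil !trQ; by field.
Qed.


Lemma projE n a (S rho : 'M[C]_n) : proj a S *m rho *m proj a S =
  4^-1 *: (rho + a *: (S *m rho) + a *: (rho *m S + a *: (S *m rho *m S))).
Proof.
rewrite /proj -!scalemxAl -scalemxAr scalerA mul1S mulmxDr mulmx1.
rewrite -!scalemxAr mulmxDl -scalemxAl -addrA.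
congr (_ *: _); first by rewrite -invfM -natrM.
Qed.

Lemma meas1 n (S rho : 'M[C]_n) :
  proj 1 S *m rho *m proj 1 S - proj (-1) S *m rho *m proj (-1) S
  = 2^-1 *: (S *m rho + rho *m S).
Proof.
rewrite !projE; apply/matrixP=> i j; rewrite !mxE.
by field.
Qed.

Lemma proj_herm n a (S : 'M[C]_n) : a^* = a -> adjmx S = S -> adjmx (proj a S) = proj a S.
Proof.
move=> ha hS; rewrite /proj adjmxZ adjmxD adjmx1 adjmxZ ha hS.
by rewrite fmorphV rmorph_nat.
Qed.


Lemma state_trick N (rho0 X : 'M[C]_N) : state rho0 -> psd X ->
  exists k : C, k != 0 /\ state (k *: (rho0 + X)).
Proof.
move=> [H0 T0] HX; set t := \tr X.
have t0 : 0 <= t by apply: psd_tr.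
have p : 0 < 1 + t by rewrite ltr_wpDr // ltr01.
exists (1 + t)^-1; split; first by rewrite invr_eq0 gt_eqF.
split; first by apply: psd_scale; [rewrite invr_ge0 ltW | apply: psd_add].
by rewrite mxtraceZ mxtraceD T0 mulVf // gt_eqF.
Qed.

Lemma ns2_psd m n (P : {linear 'M[C]_(m * n) -> 'M[C]_(m * n)})
  (T : {linear 'M[C]_m -> 'M[C]_m}) (rho0 X : 'M[C]_(m * n)) :
  (forall rho : 'M[C]_(m * n), state rho -> ptr2 (P rho) = T (ptr2 rho)) ->
  state rho0 -> psd X -> ptr2 (P X) = T (ptr2 X).
Proof.
move=> H S0 HX; have [k [k0 Sk]] := state_trick S0 HX.
have := H _ Sk; rewrite !linearZ /= ptr2Z linearD /= ptr2D.
rewrite ptr2Z ptr2D !linearD /= H //.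
by rewrite !linearZ /= -!scalerDr => /(scalerI k0) /addrI.
Qed.

Lemma ns1_psd m n (P : {linear 'M[C]_(m * n) -> 'M[C]_(m * n)})
  (T : {linear 'M[C]_n -> 'M[C]_n}) (rho0 X : 'M[C]_(m * n)) :
  (forall rho : 'M[C]_(m * n), state rho -> ptr1 (P rho) = T (ptr1 rho)) ->
  state rho0 -> psd X -> ptr1 (P X) = T (ptr1 X).
Proof.
move=> H S0 HX; have [k [k0 Sk]] := state_trick S0 HX.
have := H _ Sk; rewrite !linearZ /= ptr1Z linearD /= ptr1D.
rewrite ptr1Z ptr1D !linearD /= H //.
by rewrite !linearZ /= -!scalerDr => /(scalerI k0) /addrI.
Qed.


Lemma psd_X n a (S rho : 'M[C]_n) : a^* = a -> adjmx S = S -> psd rho ->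
  psd (proj a S *m rho *m proj a S).
Proof.
move=> ha hS Hr; rewrite -{1}(proj_herm ha hS); exact: psd_conjW.
Qed.

Lemma corr2 m n (P : {linear 'M[C]_(m * n) -> 'M[C]_(m * n)})
  (T : {linear 'M[C]_m -> 'M[C]_m}) (rho S1 : 'M[C]_(m * n)) (A : 'M[C]_m) :
  (forall rho : 'M[C]_(m * n), state rho -> ptr2 (P rho) = T (ptr2 rho)) ->
  state rho -> adjmx S1 = S1 ->
  corr P rho S1 (A *t (1%:M : 'M_n)) =
  \tr (A *m T (ptr2 (2^-1 *: (S1 *m rho + rho *m S1)))).
Proof.
move=> H Sr HS; rewrite corr_eq !trace_tens2.
have c1 : (1 : C)^* = 1 by rewrite rmorph1.
have c2 : (-1 : C)^* = -1 by rewrite rmorphN rmorph1.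
rewrite (ns2_psd H Sr (psd_X c1 HS Sr.1)) (ns2_psd H Sr (psd_X c2 HS Sr.1)).
by rewrite -raddfB /= -mulmxBr -linearB /= -ptr2B meas1.
Qed.

Lemma corr1 m n (P : {linear 'M[C]_(m * n) -> 'M[C]_(m * n)})
  (T : {linear 'M[C]_n -> 'M[C]_n}) (rho S1 : 'M[C]_(m * n)) (B : 'M[C]_n) :
  (forall rho : 'M[C]_(m * n), state rho -> ptr1 (P rho) = T (ptr1 rho)) ->
  state rho -> adjmx S1 = S1 ->
  corr P rho S1 ((1%:M : 'M_m) *t B) =
  \tr (B *m T (ptr1 (2^-1 *: (S1 *m rho + rho *m S1)))).
Proof.
move=> H Sr HS; rewrite corr_eq !trace_tens1.
have c1 : (1 : C)^* = 1 by rewrite rmorph1.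
have c2 : (-1 : C)^* = -1 by rewrite rmorphN rmorph1.
rewrite (ns1_psd H Sr (psd_X c1 HS Sr.1)) (ns1_psd H Sr (psd_X c2 HS Sr.1)).
by rewrite -raddfB /= -mulmxBr -linearB /= -ptr1B meas1.
Qed.


Definition Mb m n (rho : 'M[C]_(m * n)) (B : 'M[C]_n) : 'M[C]_m :=
  \matrix_(i, i') \sum_a \sum_a' rho (mxtens_index (i, a)) (mxtens_index (i', a')) * B a' a.
Definition Ma m n (rho : 'M[C]_(m * n)) (A : 'M[C]_m) : 'M[C]_n :=
  \matrix_(k, k') \sum_a \sum_a' rho (mxtens_index (a, k)) (mxtens_index (a', k')) * A a' a.

Lemma half_double p q (x : 'M[C]_(p, q)) : 2^-1 *: (x + x) = x.
Proof.
by rewrite -mulr2n -scaler_nat scalerA mulVf ?scale1r // pnatr_eq0.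
Qed.

Lemma ptr2_sym m n (B : 'M[C]_n) (rho : 'M[C]_(m * n)) :
  ptr2 (2^-1 *: (((1%:M : 'M_m) *t B) *m rho + rho *m ((1%:M : 'M_m) *t B))) = Mb rho B.
Proof.
rewrite ptr2Z ptr2D.
have -> : ptr2 (((1%:M : 'M_m) *t B) *m rho) = Mb rho B.
  apply/matrixP=> i i'; rewrite !mxE exchange_big; apply: eq_bigr => a' _.
  rewrite mxE sum_tens exchange_big; apply: eq_bigr => a _.
  under eq_bigr do rewrite tensmxE mxE -mulrA.
  rewrite (bigD1 i) //= eqxx mul1r big1 ?addr0; first by rewrite mulrC.
  by move=> j /negbTE; rewrite eq_sym => ->; rewrite mul0r.
have -> : ptr2 (rho *m ((1%:M : 'M_m) *t B)) = Mb rho B.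
  apply/matrixP=> i i'; rewrite !mxE; apply: eq_bigr => a _.
  rewrite mxE sum_tens exchange_big; apply: eq_bigr => a' _.
  under eq_bigr do rewrite tensmxE mxE mulrCA mulrA.
  by rewrite -big_distrl /= sum_delta'.
exact: half_double.
Qed.


Lemma ptr1_sym m n (A : 'M[C]_m) (rho : 'M[C]_(m * n)) :
  ptr1 (2^-1 *: ((A *t (1%:M : 'M_n)) *m rho + rho *m (A *t (1%:M : 'M_n)))) = Ma rho A.
Proof.
rewrite ptr1Z ptr1D.
have -> : ptr1 ((A *t (1%:M : 'M_n)) *m rho) = Ma rho A.
  apply/matrixP=> k k'; rewrite !mxE [RHS]exchange_big; apply: eq_bigr => j _.
  rewrite mxE sum_tens; apply: eq_bigr => a _.
  under eq_bigr do rewrite tensmxE mxE mulrAC mulrC.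
  by rewrite sum_delta mulrC.
have -> : ptr1 (rho *m (A *t (1%:M : 'M_n))) = Ma rho A.
  apply/matrixP=> k k'; rewrite !mxE; apply: eq_bigr => j _.
  rewrite mxE sum_tens; apply: eq_bigr => a _.
  under eq_bigr do rewrite tensmxE mxE mulrA mulrC.
  by rewrite sum_delta'.
exact: half_double.
Qed.

End L.

Section P.
Variable C : numClosedFieldType.

Lemma pauli1_K (p q r s : 'I_2) :
  \sum_(x < 4) (pauli1 C x) p q * (pauli1 C x) r s = 2 * ((p == s)%:R * (q == r)%:R).
Proof.
rewrite !big_ord_recr big_ord0 /=.
have ii : 'i * 'i = -1 :> C by rewrite -expr2 sqrCi.
case: p => [[|[|?]] ?] //; case: q => [[|[|?]] ?] //; case: r => [[|[|?]] ?] //;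
  case: s => [[|[|?]] ?] //; rewrite !mxE /=.
all: try ring.
all: rewrite ?mulrNN ?mulNr ?mulrN ii; ring.
Qed.


Lemma pauli1_herm (x : 'I_4) : adjmx (pauli1 C x) = pauli1 C x.
Proof.
have ci : ('i : C)^* = - 'i by rewrite conjCi.
apply/matrixP=> r c; rewrite adjmxE.
case: x => [[|[|[|[|?]]]] ?] //=;
case: r => [[|[|?]] ?] //; case: c => [[|[|?]] ?] //; rewrite !mxE /=;
  rewrite ?rmorph0 ?rmorph1 ?rmorphN /= ?ci ?opprK ?conjC1 ?conjC0 //.
Qed.

Lemma pauliN_herm n (f : nat -> 'I_4) : adjmx (pauliN C n f) = pauliN C n f.
Proof.
elim: n f => [|n IH] f /=; first by rewrite adjmx1.
by rewrite adjmxT pauli1_herm IH.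
Qed.

Lemma pauli_herm n (j : n.-tuple 'I_4) : adjmx (pauli C j) = pauli C j.
Proof. exact: pauliN_herm. Qed.

Lemma sum_tuple_cons n (F : n.+1.-tuple 'I_4 -> C) :
  \sum_t F t = \sum_(x : 'I_4) \sum_(t : n.-tuple 'I_4) F [tuple of x :: t].
Proof.
rewrite pair_big /=.
rewrite (reindex (fun p : 'I_4 * n.-tuple 'I_4 => [tuple of p.1 :: p.2])) /=; last first.
  exists (fun t : n.+1.-tuple 'I_4 => (thead t, [tuple of behead t])) => /=.
    by move=> [x t] _ /=; congr (_, _); apply: val_inj.
  by move=> t _; rewrite [RHS]tuple_eta.
by apply: eq_bigr => [[x t]].
Qed.

Lemma pauli_cons n x (t : n.-tuple 'I_4) :
  pauli C [tuple of x :: t] = pauli1 C x *t pauli C t.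
Proof. by []. Qed.

Lemma pauli_K n (p q r s : 'I_(pow2 n)) :
  \sum_(j : n.-tuple 'I_4) (pauli C j) p q * (pauli C j) r s
   = 2 ^+ n * ((p == s)%:R * (q == r)%:R).
Proof.
elim: n p q r s => [|n IH] p q r s.
  rewrite (bigD1 [tuple]) //= big1 ?addr0; last first.
    by move=> t; rewrite (tuple0 t) => /negP; case; apply: eqxx.
  by rewrite !ord1 !mxE eqxx expr0 !mul1r.
case: (@mxtens_indexP 2 (pow2 n) p) => p1 p2.
case: (@mxtens_indexP 2 (pow2 n) q) => q1 q2.
case: (@mxtens_indexP 2 (pow2 n) r) => r1 r2.
case: (@mxtens_indexP 2 (pow2 n) s) => s1 s2.
rewrite sum_tuple_cons.
under eq_bigr do under eq_bigr do rewrite pauli_cons !tensmxE mulrACA.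
under eq_bigr do rewrite -mulr_sumr IH.
rewrite -mulr_suml pauli1_K.
have E (a b : 'I_2) (c d : 'I_(pow2 n)) :
  (mxtens_index (a, c) == mxtens_index (b, d)) = (a == b) && (c == d).
  by rewrite (inj_eq (can_inj (@mxtens_indexK 2 (pow2 n)))) xpair_eqE.
rewrite !E -!mulnb !natrM exprS; ring.
Qed.

Lemma pauli_G n (G : 'I_(pow2 n) -> 'I_(pow2 n) -> C) p q :
  \sum_(j : n.-tuple 'I_4) pauli C j p q * (\sum_a \sum_a' G a a' * pauli C j a' a)
  = 2 ^+ n * G p q.
Proof.
under eq_bigr do rewrite mulr_sumr; rewrite exchange_big.
under eq_bigr do (under eq_bigr do rewrite mulr_sumr; rewrite exchange_big).
have E a a' : \sum_(j : n.-tuple 'I_4) pauli C j p q * (G a a' * pauli C j a' a)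
   = (p == a)%:R * ((q == a')%:R * (G a a' * 2 ^+ n)).
  transitivity (G a a' * (2 ^+ n * ((p == a)%:R * (q == a')%:R))); last by ring.
  rewrite -pauli_K mulr_sumr; apply: eq_bigr => j _; ring.
under eq_bigr do (under eq_bigr do rewrite E; rewrite -mulr_sumr sum_delta).
by rewrite sum_delta mulrC.
Qed.

Lemma pauli_tr n (Y : 'M[C]_(pow2 n)) i i' :
  \sum_(k : n.-tuple 'I_4) \tr (pauli C k *m Y) * pauli C k i i' = 2 ^+ n * Y i i'.
Proof.
have E k : \tr (pauli C k *m Y) = \sum_a \sum_a' Y a a' * pauli C k a' a.
  by rewrite exchange_big; apply: eq_bigr => a _; rewrite mxE; apply: eq_bigr => a' _; rewrite mulrC.
under eq_bigr do rewrite E mulrC.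
by rewrite pauli_G.
Qed.


Lemma amplE k m n (Phi : 'M[C]_m -> 'M[C]_n) (X : 'M[C]_(k * m)) p i q i' :
  ampl Phi X (mxtens_index (p, i)) (mxtens_index (q, i'))
  = Phi (\matrix_(a, b) X (mxtens_index (p, a)) (mxtens_index (q, b))) i i'.
Proof. by rewrite mxE !mxtens_indexK. Qed.

Lemma assemble (I J : finType) m n (sig1 : I -> 'M[C]_n) (sig2 : J -> 'M[C]_m)
  (Phi : {linear 'M[C]_m -> 'M[C]_m}) (M : I -> 'M[C]_m) (X : 'M[C]_(n * m))
  (c d e : C) :
  (forall Y i i', \sum_k \tr (sig2 k *m Y) * sig2 k i i' = d * Y i i') ->
  (forall p q, \matrix_(a, b) X (mxtens_index (p, a)) (mxtens_index (q, b))
               = e *: \sum_j sig1 j p q *: M j) ->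
  c * d = e ->
  c *: (\sum_j \sum_k \tr (sig2 k *m Phi (M j)) *: (sig1 j *t sig2 k)) = ampl Phi X.
Proof.
move=> Hc Hb Hcd; apply: tens_mxP => p i q i'.
rewrite amplE Hb [Phi _]linearZ [Phi _]linear_sum /=.
rewrite !(mxE, summxE) -Hcd -mulrA; congr (_ * _).
rewrite mulr_sumr; apply: eq_bigr => j _.
rewrite summxE linearZ /= mxE.
under eq_bigr do rewrite mxE tensmxE mulrCA.
by rewrite -mulr_sumr Hc; ring.
Qed.

Lemma ampl_tr k m (Phi : {linear 'M[C]_m -> 'M[C]_m}) (X : 'M[C]_(k * m)) :
  \tr (ampl Phi X) =
  \tr (Phi (\sum_p \matrix_(a, b) X (mxtens_index (p, a)) (mxtens_index (p, b)))).
Proof.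
rewrite /mxtrace sum_tens linear_sum /=.
under [RHS]eq_bigr do rewrite summxE.
rewrite [RHS]exchange_big; apply: eq_bigr => p _; apply: eq_bigr => i _.
by rewrite amplE.
Qed.

End P.

Lemma two_pow_neq0 (C : numClosedFieldType) k : (2 : C) ^+ k != 0.
Proof. by rewrite expf_neq0 // pnatr_eq0. Qed.

Theorem corollary1 (C : numClosedFieldType) (nA nB : nat)
  (P : {linear 'M[C]_(pow2 nA * pow2 nB) -> 'M[C]_(pow2 nA * pow2 nB)}) :
  cp P -> tp P -> no_signalling P ->
  forall rho : 'M[C]_(pow2 nA * pow2 nB), state rho ->
    [/\ psd (R_B1A2 P rho), psd (R_A1B2 P rho),
        pdm_neg (R_B1A2 P rho) = 0 & pdm_neg (R_A1B2 P rho) = 0].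
Proof.
move=> cpP tpP [T [S [cpT [cpS Hns]]]] rho Sr.
have H2 : forall r, state r -> ptr2 (P r) = T (ptr2 r) by move=> r /Hns [].
have H1 : forall r, state r -> ptr1 (P r) = S (ptr1 r) by move=> r /Hns [].
have n2 := @two_pow_neq0 C.
pose sw (y : 'I_(pow2 nB * pow2 nA)) : 'I_(pow2 nA * pow2 nB) :=
  mxtens_index ((mxtens_unindex y).2, (mxtens_unindex y).1).
pose Z : 'M[C]_(pow2 nB * pow2 nA) := \matrix_(x, y) rho (sw x) (sw y).
pose W : 'M[C]_(pow2 nA * pow2 nB, pow2 nB * pow2 nA) :=
  \matrix_(x, y) (x == sw y)%:R.
have EZ : Z = adjmx W *m rho *m W.
  apply/matrixP=> y z; rewrite [RHS]mxE.
  under eq_bigr do rewrite [W _ _]mxE mulrC.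
  rewrite sum_delta' mxE [RHS]mxE.
  under eq_bigr do rewrite adjmxE mxE rmorph_nat.
  by rewrite sum_delta'.
have psdZ : psd Z by rewrite EZ; apply: psd_conjW; case: Sr.
have RB : R_B1A2 P rho = ampl T Z.
  have Ec j k : corr P rho (1%:M *t pauli C j) (pauli C k *t 1%:M)
               = \tr (pauli C k *m T (Mb rho (pauli C j))).
    by rewrite (corr2 _ H2 Sr) ?ptr2_sym // adjmxT adjmx1 pauli_herm.
  rewrite /R_B1A2; under eq_bigr do under eq_bigr do rewrite Ec.
  apply: (@assemble C _ _ _ _ _ _ T _ Z _ (2 ^+ nA) ((2 ^+ nB)^-1)).
  - by move=> Y i i'; apply: pauli_tr.
  - move=> p q; apply/matrixP=> a b; rewrite !mxE summxE.
    under eq_bigr do rewrite mxE mxE.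
    rewrite (pauli_G (fun x y => rho (mxtens_index (a, x)) (mxtens_index (b, y)))).
    by rewrite /sw !mxtens_indexK /= mulrA mulVf ?mul1r.
  - by rewrite exprD invfM mulrAC mulVf ?mul1r.
have RA : R_A1B2 P rho = ampl S rho.
  have Ec i l : corr P rho (pauli C i *t 1%:M) (1%:M *t pauli C l)
               = \tr (pauli C l *m S (Ma rho (pauli C i))).
    by rewrite (corr1 _ H1 Sr) ?ptr1_sym // adjmxT adjmx1 pauli_herm.
  rewrite /R_A1B2; under eq_bigr do under eq_bigr do rewrite Ec.
  apply: (@assemble C _ _ _ _ _ _ S _ rho _ (2 ^+ nB) ((2 ^+ nA)^-1)).
  - by move=> Y i i'; apply: pauli_tr.
  - move=> p q; apply/matrixP=> a b; rewrite !mxE summxE.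
    under eq_bigr do rewrite mxE mxE.
    rewrite (pauli_G (fun x y => rho (mxtens_index (x, a)) (mxtens_index (y, b)))).
    by rewrite mulrA mulVf ?mul1r.
  - by rewrite exprD invfM -mulrA mulVf ?mulr1.
have psdB : psd (R_B1A2 P rho) by rewrite RB; apply: cpT.
have psdA : psd (R_A1B2 P rho) by rewrite RA; apply: cpS; case: Sr.
split=> //; apply: pdm_neg0 => //.
- rewrite RB ampl_tr.
  have -> : \sum_p \matrix_(a, b) Z (mxtens_index (p, a)) (mxtens_index (p, b))
            = ptr2 rho.
    apply/matrixP=> a b; rewrite summxE ptr2E; apply: eq_bigr => p _.
    by rewrite !mxE /sw !mxtens_indexK.
  by rewrite -H2 // tr_ptr2 tpP; case: Sr.
- rewrite RA ampl_tr.
  have -> : \sum_p \matrix_(a, b) rho (mxtens_index (p, a)) (mxtens_index (p, b))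
            = ptr1 rho.
    apply/matrixP=> a b; rewrite summxE ptr1E; apply: eq_bigr => p _.
    by rewrite !mxE.
  by rewrite -H1 // tr_ptr1 tpP; case: Sr.
Qed.
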